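(* The set $\{A/B : A, B \in \mathtt{PAL}\}$ is dense in the positive real numbers $\mathbb{R}^{+}$.
   Context: For an integer $n\ge 1$, $(n)_2$ denotes its binary representation, with most significant digit first and no leading zeros. A positive integer $n$ is palindromic if $(n)_2$ reads the same forwards and backwards; $\mathtt{PAL}=\{1,3,5,7,9,15,17,\dots\}$ denotes the set of palindromic numbers. *)

(* Defs.v *)
From Stdlib Require Import Reals Lra Lia Arith List.
Import ListNotations.

(* Binary digits of n, least significant first; no leading zeros (bits 0 = []).
   Fuel-based to make termination structural; fuel n suffices since n/2 < n. *)
Fixpoint bits_aux (fuel n : nat) : list bool :=
  match fuel with
  | O => []
  | S f => match n with
           | O => []
           | _ => Nat.odd n :: bits_aux f (Nat.div2 n)
           end
  end.

Definition bits (n : nat) : list bool := bits_aux n n.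

Definition binary_rep (n : nat) : list bool := rev (bits n).

Definition palindromic (n : nat) : Prop :=
  1 <= n /\ binary_rep n = rev (binary_rep n).

Example bits_sanity : binary_rep 6 = [true; true; false] /\ binary_rep 9 = [true; false; false; true].
Proof. split; reflexivity. Qed.

(* Main.v *)
Require Import Defs.
From Stdlib Require Import Reals.
From Stdlib Require Import Reals Lra Lia Arith List ZArith.
Import ListNotations.

Fixpoint val (l : list bool) : nat :=
  match l with [] => 0 | b :: l' => Nat.b2n b + 2 * val l' end.

Definition canon (l : list bool) := l = [] \/ last l false = true.

Lemma val_app l1 l2 : val (l1 ++ l2) = val l1 + 2 ^ length l1 * val l2.
Proof. induction l1; simpl; [lia|]. rewrite IHl1. lia. Qed.

Lemma val_lt l : val l < 2 ^ length l.
Proof. induction l as [|b l IH]; simpl; [lia|]. destruct b; simpl; lia. Qed.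

Lemma val_zeros n : val (repeat false n) = 0.
Proof. induction n; simpl; lia. Qed.

Lemma canon_tail b l : canon (b :: l) -> canon l.
Proof. unfold canon; intros [H|H]; [discriminate|]. destruct l; [now left|now right]. Qed.

Lemma canon_pos l : l <> [] -> canon l -> 0 < val l.
Proof.
  induction l as [|b l IH]; intros Hn Hc; [congruence|].
  simpl. destruct l as [|c l'].
  - destruct Hc as [H|H]; [discriminate|]. simpl in H. subst. simpl. lia.
  - assert (0 < val (c :: l')) by (apply IH; [discriminate| eapply canon_tail; eauto]). lia.
Qed.

Lemma bits_aux_canon : forall l f, canon l -> val l <= f -> bits_aux f (val l) = l.
Proof.
  induction l as [|b l IH]; intros f Hc Hf.
  - destruct f; reflexivity.
  - assert (Hp : 0 < val (b :: l)) by (apply canon_pos; [discriminate|auto]).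
    destruct f as [|f]; [lia|].
    remember (val (b :: l)) as n eqn:En.
    destruct n as [|n']; [lia|]. cbn [bits_aux].
    rewrite En. change (val (b :: l)) with (Nat.b2n b + 2 * val l).
    assert (Ho : Nat.odd (Nat.b2n b + 2 * val l) = b)
      by (rewrite Nat.odd_add_mul_2; destruct b; reflexivity).
    assert (Hd : Nat.div2 (Nat.b2n b + 2 * val l) = val l)
      by (destruct b; simpl Nat.b2n; [rewrite Nat.add_1_l, Nat.div2_succ_double|rewrite Nat.add_0_l, Nat.div2_double]; reflexivity).
    rewrite Ho, Hd, IH; auto.
    + eapply canon_tail; eauto.
    + simpl in En. destruct (val l) eqn:E; [lia|]. destruct b; simpl in En; lia.
Qed.

Lemma bits_aux_spec : forall f n, n <= f -> val (bits_aux f n) = n /\ canon (bits_aux f n).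
Proof.
  induction f as [|f IH]; intros n Hn.
  - assert (n = 0) by lia. subst. split; [reflexivity|now left].
  - destruct n as [|n']; [split; [reflexivity|now left]|].
    cbn [bits_aux]. remember (S n') as n eqn:En. assert (0 < n) by lia. clear En.
    assert (Hd: Nat.div2 n <= f).
    { pose proof (Nat.div2_odd n). destruct (Nat.odd n); simpl in H0; lia. }
    destruct (IH _ Hd) as [H1 H2].
    split.
    + simpl. rewrite H1. pose proof (Nat.div2_odd n). lia.
    + right. destruct (bits_aux f (Nat.div2 n)) as [|c l] eqn:E.
      * simpl in H1. pose proof (Nat.div2_odd n). simpl. destruct (Nat.odd n); simpl in *; lia.
      * destruct H2 as [H2|H2]; [discriminate|]. exact H2.
Qed.

Lemma last_app_cons (l1 l2 : list bool) b : last (l1 ++ b :: l2) false = last (b :: l2) false.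
Proof.
  induction l1 as [|a l1 IH]; [reflexivity|].
  simpl app. rewrite <- IH. destruct l1; simpl; destruct l2; reflexivity.
Qed.

Lemma pal_of_list l : l <> [] -> canon l -> rev l = l -> palindromic (val l).
Proof.
  intros Hn Hc Hr. split.
  - pose proof (canon_pos l Hn Hc). lia.
  - unfold binary_rep, bits. rewrite rev_involutive.
    rewrite bits_aux_canon; auto.
Qed.

Open Scope R_scope.

Lemma div_lt u v w : 0 < v -> u < w * v -> u / v < w.
Proof.
  intros Hv H. unfold Rdiv. replace w with (w * v * / v) by (field; lra).
  apply Rmult_lt_compat_r; [apply Rinv_0_lt_compat; lra| exact H].
Qed.

Lemma lt_div u v w : 0 < v -> w * v < u -> w < u / v.
Proof.
  intros Hv H. unfold Rdiv. replace w with (w * v * / v) by (field; lra).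
  apply Rmult_lt_compat_r; [apply Rinv_0_lt_compat; lra| exact H].
Qed.

Lemma est P K M N R : 0 < P -> 1 <= K -> 1 <= M -> 0 <= R < P -> 0 <= N < P ->
  N / M - / K < (P*K*N+R)/(P*K*M+1) < N / M + / K.
Proof.
  intros HP HK HM HR HN.
  assert (HB : 0 < P*K*M+1) by (assert (0 < P*K*M) by (repeat apply Rmult_lt_0_compat; lra); lra).
  assert (E : (P*K*N+R)/(P*K*M+1) = N/M + (M*R - N)/(M*(P*K*M+1))) by (field; lra).
  rewrite E.
  assert (HMB : 0 < M*(P*K*M+1)) by (apply Rmult_lt_0_compat; lra).
  assert (H1 : (M*R-N)/(M*(P*K*M+1)) < / K).
  { apply div_lt; auto. apply Rmult_lt_reg_l with K; [lra|].
    replace (K * (/ K * (M * (P * K * M + 1)))) with (M * (P * K * M + 1)) by (field; lra).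
    assert (K*M*R < K*M*P) by (apply Rmult_lt_compat_l; [apply Rmult_lt_0_compat|]; lra).
    assert (M*P <= M*P*M) by (rewrite <- (Rmult_1_r (M*P)) at 1; apply Rmult_le_compat_l; [apply Rmult_le_pos|]; lra).
    assert (K*(M*P) <= K*(M*P*M)) by (apply Rmult_le_compat_l; lra).
    assert (0 <= K*N) by (apply Rmult_le_pos; lra).
    assert (0 < M) by lra.
    ring_simplify. lra. }
  assert (H2 : - / K < (M*R-N)/(M*(P*K*M+1))).
  { apply lt_div; auto. apply Rmult_lt_reg_l with K; [lra|].
    replace (K * (- / K * (M * (P * K * M + 1)))) with (- (M * (P * K * M + 1))) by (field; lra).
    assert (K*N < K*P) by (apply Rmult_lt_compat_l; lra).
    assert (0 <= K*M*R) by (repeat apply Rmult_le_pos; lra).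
    assert (P <= P*K*M*M).
    { assert (1 <= K*M*M) by (assert (1 <= K*M) by nra; nra). nra. }
    assert (K*P <= M*(P*K*M)).
    { assert (K*P*1 <= K*P*(M*M)) by (apply Rmult_le_compat_l; [nra|nra]). nra. }
    assert (0 < M) by lra.
    ring_simplify. lra. }
  lra.
Qed.

Lemma INR_le_pow2 n : INR n <= 2 ^ n.
Proof.
  induction n; [simpl; lra|]. rewrite S_INR. simpl pow.
  assert (1 <= 2 ^ n) by (apply pow_R1_Rle; lra). lra.
Qed.

Lemma small_pow e : 0 < e -> exists k, / 2 ^ k < e.
Proof.
  intros He. destruct (archimed_cor1 e He) as [n [Hn Hn0]].
  exists n. eapply Rle_lt_trans; [|exact Hn].
  apply Rinv_le_contravar; [apply lt_0_INR; lia| apply INR_le_pow2].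
Qed.

Lemma INR2 : INR 2 = 2. Proof. simpl; lra. Qed.

Lemma INR_val_A w k : INR (val (rev w ++ repeat false k ++ w)) =
  INR (val (rev w)) + 2 ^ length w * 2 ^ k * INR (val w).
Proof.
  rewrite !val_app, val_zeros, length_rev, repeat_length.
  rewrite Nat.add_0_l, !plus_INR, !mult_INR, !pow_INR. rewrite INR2. ring.
Qed.

Lemma INR_val_B j : INR (val (true :: repeat false j ++ [true])) = 2 ^ S j + 1.
Proof.
  change (val (true :: repeat false j ++ [true])) with (1 + 2 * val (repeat false j ++ [true]))%nat.
  rewrite val_app, val_zeros, repeat_length. simpl val.
  rewrite Nat.add_0_l, Nat.mul_1_r, plus_INR, mult_INR, pow_INR, INR2.
  simpl (INR 1). simpl pow. ring.
Qed.

Theorem theorem2 :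
  forall x y : R, 0 < x -> x < y ->
    exists A B : nat, palindromic A /\ palindromic B /\
      x < INR A / INR B < y.
Proof.
  intros x y hx hxy.
  destruct (small_pow ((y - x)/2)) as [m Hm]; [lra|].
  set (M := 2 ^ S m).
  assert (HM1 : 1 <= M) by (apply pow_R1_Rle; lra).
  assert (HMm : / M <= / 2 ^ m).
  { apply Rinv_le_contravar; [apply pow_lt; lra|]. unfold M. simpl.
    assert (0 < 2 ^ m) by (apply pow_lt; lra). lra. }
  destruct (archimed (x * M)) as [Hu1 Hu2].
  assert (Hpos : (0 < up (x * M))%Z).
  { apply lt_0_IZR. assert (0 < x * M) by (apply Rmult_lt_0_compat; lra). lra. }
  set (Nn := Z.to_nat (up (x * M))).
  assert (HN : INR Nn = IZR (up (x * M))).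
  { unfold Nn. rewrite INR_IZR_INZ, Z2Nat.id; [reflexivity|lia]. }
  assert (HNx : x < INR Nn / M).
  { apply lt_div; lra. }
  assert (HNy : INR Nn / M < x + (y - x) / 2).
  { replace (INR Nn / M) with (x + (INR Nn - x * M) / M) by (field; lra).
    assert ((INR Nn - x * M) / M <= / M).
    { unfold Rdiv. rewrite <- (Rmult_1_l (/ M)) at 2. apply Rmult_le_compat_r; [|lra].
      left; apply Rinv_0_lt_compat; lra. }
    lra. }
  destruct (small_pow (Rmin (INR Nn / M - x) (y - INR Nn / M))) as [k Hk].
  { apply Rmin_glb_lt; lra. }
  assert (Hk1 : / 2 ^ k < INR Nn / M - x) by (eapply Rlt_le_trans; [exact Hk| apply Rmin_l]).
  assert (Hk2 : / 2 ^ k < y - INR Nn / M) by (eapply Rlt_le_trans; [exact Hk| apply Rmin_r]).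
  set (w := bits Nn).
  destruct (bits_aux_spec Nn Nn (le_n _)) as [Hw1 Hw2]. fold (bits Nn) in Hw1, Hw2. fold w in Hw1, Hw2.
  assert (HNpos : (0 < Nn)%nat) by (unfold Nn; lia).
  assert (Hwne : w <> []) by (intro E; rewrite E in Hw1; simpl in Hw1; lia).
  set (lA := rev w ++ repeat false k ++ w).
  set (lB := true :: repeat false (length w + k + m) ++ [true]).
  exists (val lA), (val lB).
  split; [|split].
  - apply pal_of_list.
    + unfold lA. destruct w; [congruence|]. intro E. apply (f_equal (@length bool)) in E. rewrite !length_app in E. simpl in E. lia.
    + right. unfold lA. rewrite app_assoc. destruct w as [|c w']; [congruence|].
      rewrite last_app_cons. destruct Hw2 as [E|E]; [discriminate|exact E].
    + unfold lA. rewrite !rev_app_distr, rev_involutive, rev_repeat, app_assoc. reflexivity.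
  - apply pal_of_list.
    + unfold lB. discriminate.
    + right. unfold lB. change (true :: repeat false (length w + k + m) ++ [true])
        with ((true :: repeat false (length w + k + m)) ++ [true]). apply last_last.
    + unfold lB. simpl. rewrite rev_app_distr, rev_repeat. reflexivity.
  - unfold lA, lB. rewrite INR_val_A, INR_val_B. rewrite Hw1.
    replace (2 ^ S (length w + k + m)) with (2 ^ length w * 2 ^ k * M)
      by (unfold M; rewrite <- !pow_add; f_equal; lia).
    assert (HPw := val_lt (rev w)). rewrite length_rev in HPw.
    assert (HPn := val_lt w). rewrite Hw1 in HPn.
    apply lt_INR in HPw, HPn. rewrite pow_INR in HPw, HPn. rewrite INR2 in HPw, HPn.
    destruct (est (2 ^ length w) (2 ^ k) M (INR Nn) (INR (val (rev w)))) as [E1 E2].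
    + apply pow_lt; lra.
    + apply pow_R1_Rle; lra.
    + exact HM1.
    + split; [apply pos_INR|lra].
    + split; [apply pos_INR|lra].
    + split; lra.
Qed.
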